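(* There is an absolute constant $C>0$ such that the following holds. Let $\mathbf T:\{0,1\}^n\to\{0,1\}$ be a size-$s$ stochastic decision tree. For every $\varepsilon\in(0,1/2)$ there is a deterministic decision tree $T^\star_{\mathrm{trunc}}:\{0,1\}^n\to\{0,1\}$ such that (1) $\mathrm{depth}(T^\star_{\mathrm{trunc}})\le C\log(s/\varepsilon)/\varepsilon^2$, and (2) $\Pr_{\mathbf x,\mathbf T}[T^\star_{\mathrm{trunc}}(\mathbf x)\neq\mathbf T(\mathbf x)]\le\mathrm{opt}_{\mathbf T}+3\varepsilon$, where $\mathbf x$ is uniform on $\{0,1\}^n$.
   Context: A stochastic decision tree (DT) $\mathbf{T}$ over $\{0,1\}^n$ is a rooted binary tree whose internal nodes are either deterministic nodes, each labeled by a variable $x_i$ ($i\in[n]$) with one outgoing edge followed when $x_i=0$ and one when $x_i=1$, or stochastic nodes, each with two outgoing edges followed with probabilities $p$ and $1-p$ (for a node-specific $p\in[0,1]$, using fresh independent randomness at each node), and whose leaves are labeled $0$ or $1$. On input $x$, $\mathbf{T}(x)$ is the (random) label of the leaf reached. A deterministic DT is one with no stochastic nodes. The size of a DT is its number of leaves; its depth is the maximum number of internal nodes on a root-to-leaf path. The mean function is $\mu_{\mathbf T}(x)=\Pr[\mathbf T(x)=1]$, $\mathrm{round}(t)=\mathbb 1[t\ge1/2]$, and $\mathrm{opt}_{\mathbf T}=\mathbb E_{\mathbf x}\Pr_{\mathbf T}[\mathbf T(\mathbf x)\ne\mathrm{round}(\mu_{\mathbf T}(\mathbf x))]$ is the Bayes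 optimal error. *)

(* Defs.v *)
From HB Require Import structures.
From mathcomp Require Import all_boot all_order all_algebra.
From mathcomp Require Import Rstruct.
From Stdlib Require Import Reals.
Set Implicit Arguments. Unset Strict Implicit. Unset Printing Implicit Defensive.
Import Order.TTheory GRing.Theory Num.Theory.
Local Open Scope ring_scope.

Definition input (n : nat) := {ffun 'I_n -> bool}.

(* Stochastic decision trees over {0,1}^n.
   SNode i l r : follow l when x_i = 0, r when x_i = 1.
   SCoin p l r : follow l with probability p, r with probability 1 - p. *)
Inductive sdt (n : nat) : Type :=
| SLeaf of bool
| SNode of 'I_n & sdt n & sdt n
| SCoin of R & sdt n & sdt n.

Fixpoint sdt_wf n (T : sdt n) : Prop :=
  match T with
  | SLeaf _ => True
  | SNode _ l r => sdt_wf l /\ sdt_wf r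
  | SCoin p l r => (0 <= p <= 1) /\ sdt_wf l /\ sdt_wf r
  end.

Fixpoint sdt_size n (T : sdt n) : nat :=
  match T with
  | SLeaf _ => 1
  | SNode _ l r => sdt_size l + sdt_size r
  | SCoin _ l r => sdt_size l + sdt_size r
  end.

(* mean function mu_T(x) = Pr[T(x) = 1] *)
Fixpoint mu n (T : sdt n) (x : input n) : R :=
  match T with
  | SLeaf b => (b : nat)%:R
  | SNode i l r => if x i then mu r x else mu l x
  | SCoin p l r => p * mu l x + (1 - p) * mu r x
  end.

Inductive dt (n : nat) : Type :=
| Leaf of bool
| Node of 'I_n & dt n & dt n.

Fixpoint dt_eval n (T : dt n) (x : input n) : bool :=
  match T with
  | Leaf b => b
  | Node i l r => if x i then dt_eval r x else dt_eval l x
  end.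

Fixpoint dt_depth n (T : dt n) : nat :=
  match T with
  | Leaf _ => 0
  | Node _ l r => (maxn (dt_depth l) (dt_depth r)).+1
  end.

Definition round (t : R) : bool := (2^-1 <= t).

(* Pr_T[T(x) <> b] for a fixed bit b *)
Definition disagree n (T : sdt n) (x : input n) (b : bool) : R :=
  if b then 1 - mu T x else mu T x.

Definition Ex n (f : input n -> R) : R :=
  ((2 ^+ n)^-1 : R) * \sum_(x : input n) f x.

Definition opt n (T : sdt n) : R := Ex (fun x => disagree T x (round (mu T x))).

(* Pr_{x,T}[T'(x) <> T(x)] for deterministic T' *)
Definition err n (T' : dt n) (T : sdt n) : R := Ex (fun x => disagree T x (dt_eval T' x)).

(* Main.v *)
Require Import Defs.
From HB Require Import structures.
From mathcomp Require Import all_boot all_order all_algebra.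
From mathcomp Require Import Rstruct.
From Stdlib Require Import Reals.
From mathcomp Require Import ring lra.
Import Order.TTheory GRing.Theory Num.Theory.
Local Open Scope ring_scope.
Set Implicit Arguments. Unset Strict Implicit. Unset Printing Implicit Defensive.

Section DT.
Variable n : nat.

Fixpoint graft (t : dt n) (k : bool -> dt n) : dt n :=
  match t with
  | Leaf b => k b
  | Node i l r => Node i (graft l k) (graft r k)
  end.

Lemma graft_eval t k x : dt_eval (graft t k) x = dt_eval (k (dt_eval t x)) x.
Proof. by elim: t => [b|i l IHl r IHr] //=; case: (x i). Qed.

Lemma graft_depth t k : (dt_depth (graft t k) <= dt_depth t + maxn (dt_depth (k false)) (dt_depth (k true)))%nat.
Proof.
elim: t => [[]|i l IHl r IHr] /=; first by rewrite leq_maxr.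
  by rewrite leq_maxl.
rewrite addSn ltnS geq_max; apply/andP; split.
  by apply: (leq_trans IHl); rewrite leq_add2r leq_maxl.
by apply: (leq_trans IHr); rewrite leq_add2r leq_maxr.
Qed.

Fixpoint runall (ts : seq (dt n)) (g : seq bool -> bool) : dt n :=
  match ts with
  | [::] => Leaf n (g [::])
  | t :: ts' => graft t (fun b => runall ts' (fun bs => g (b :: bs)))
  end.

Lemma runall_eval ts g x : dt_eval (runall ts g) x = g (map (fun t => dt_eval t x) ts).
Proof.
elim: ts g => [|t ts IH] g //=.
by rewrite graft_eval IH.
Qed.

Lemma runall_depth ts g : (dt_depth (runall ts g) <= \sum_(t <- ts) dt_depth t)%nat.
Proof.
elim: ts g => [|t ts IH] g /=; first by rewrite big_nil.
rewrite big_cons; apply: (leq_trans (graft_depth _ _)).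
by rewrite leq_add2l geq_max !IH.
Qed.

End DT.

Ltac rfix := rewrite ?RplusE ?RmultE ?RminusE ?RoppE ?R1E ?R0E.

Section Prune.
Variable n : nat.

Fixpoint lookup (rho : seq ('I_n * bool)) (i : 'I_n) : option bool :=
  match rho with
  | [::] => None
  | (j, b) :: r => if j == i then Some b else lookup r i
  end.

Definition consis (x : input n) (rho : seq ('I_n * bool)) :=
  all (fun p => x p.1 == p.2) rho.

Lemma lookup_consis x rho i b : consis x rho -> lookup rho i = Some b -> x i = b.
Proof.
elim: rho => [|[j c] r IH] //= /andP[/eqP xj cr].
case: eqP => [<- [<-]//|_]; exact: IH.
Qed.

Fixpoint prune (T : sdt n) (k : nat) (rho : seq ('I_n * bool)) : sdt n :=
  match T with
  | SLeaf b => SLeaf n b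
  | SNode i l r =>
      match lookup rho i with
      | Some b => if b then prune r k rho else prune l k rho
      | None => match k with
                | 0 => SLeaf n false
                | k'.+1 => SNode i (prune l k' ((i, false) :: rho)) (prune r k' ((i, true) :: rho))
                end
      end
  | SCoin p l r => SCoin p (prune l k rho) (prune r k rho)
  end.

Fixpoint reach (T : sdt n) (k : nat) (rho : seq ('I_n * bool)) (x : input n) : R :=
  match T with
  | SLeaf b => 0
  | SNode i l r =>
      match lookup rho i with
      | Some b => if b then reach r k rho x else reach l k rho x
      | None => match k with
                | 0 => 1
                | k'.+1 => if x i then reach r k' ((i, true) :: rho) x
                           else reach l k' ((i, false) :: rho) x
                end
      end
  | SCoin p l r => p * reach l k rho x + (1 - p) * reach r k rho x
  end.

Lemma mu01 (T : sdt n) x : sdt_wf T -> 0 <= mu T x <= 1.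
Proof.
elim: T => [b|i l IHl r IHr|p l IHl r IHr] /=.
- by case: b => _; rewrite ?ler01 ?lexx.
- by case=> /IHl ? /IHr ?; case: (x i).
- case=> /andP[p0 p1] [/IHl /andP[a0 a1] /IHr /andP[b0 b1]].
  have h1 := mulr_ge0 p0 a0.
  have h2 : 0 <= (1 - p) * mu r x by apply: mulr_ge0 => //; lra.
  have h3 : 0 <= p * (1 - mu l x) by apply: mulr_ge0 => //; lra.
  have h4 : 0 <= (1 - p) * (1 - mu r x) by apply: mulr_ge0; lra.
  apply/andP; split.
  all: rfix; lra.
Qed.

Lemma reach_ge0 (T : sdt n) k rho x : sdt_wf T -> 0 <= reach T k rho x.
Proof.
elim: T k rho => [b|i l IHl r IHr|p l IHl r IHr] k rho /=.
- by rewrite lexx.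
- case=> wl wr; case: (lookup rho i) => [[]|]; auto.
  by case: k => [|k]; [rewrite ler01|case: (x i); auto].
- case=> /andP[p0 p1] [wl wr]; rfix.
  have h1 := mulr_ge0 p0 (IHl k rho wl).
  have h2 : 0 <= (1 - p) * reach r k rho x by apply: mulr_ge0 => //; [lra|auto].
  lra.
Qed.

Lemma prune_wf (T : sdt n) k rho : sdt_wf T -> sdt_wf (prune T k rho).
Proof.
elim: T k rho => [b|i l IHl r IHr|p l IHl r IHr] k rho //=.
- case=> wl wr; case: (lookup rho i) => [[]|]; auto.
  by case: k => [|k] //=; split; auto.
- by case=> pp [wl wr]; split => //; split; auto.
Qed.

Lemma prune_err (T : sdt n) k rho x : sdt_wf T -> consis x rho ->
  `|mu T x - mu (prune T k rho) x| <= reach T k rho x.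
Proof.
elim: T k rho => [b|i l IHl r IHr|p l IHl r IHr] k rho /=.
- by move=> _ _; rewrite subrr normr0.
- case=> wl wr cx; case E: (lookup rho i) => [b|].
    have -> := lookup_consis cx E; case: b E => E; auto.
  case: k => [|k] /=.
    have /andP[m0 m1] : 0 <= (if x i then mu r x else mu l x) <= 1.
      by case: (x i); apply: mu01.
    rewrite subr0 ger0_norm //.
  case xi: (x i).
    apply: IHr => //=; by rewrite xi eqxx.
  apply: IHl => //=; by rewrite xi eqxx.
- case=> /andP[p0 p1] [wl wr] cx; rfix.
  have hl := IHl k rho wl cx; have hr := IHr k rho wr cx.
  set a := mu l x - mu (prune l k rho) x in hl.
  set b := mu r x - mu (prune r k rho) x in hr.
  have -> : p * mu l x + (1 - p) * mu r x -
     (p * mu (prune l k rho) x + (1 - p) * mu (prune r k rho) x) = p * a + (1 - p) * b.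
    by rewrite /a /b; ring.
  apply: (le_trans (ler_normD _ _)).
  have q0 : 0 <= 1 - p by lra.
  rewrite !normrM (ger0_norm p0) (ger0_norm q0).
  by apply: lerD; apply: ler_wpM2l.
Qed.


Lemma size_ge1 (T : sdt n) : (1 <= sdt_size T)%nat.
Proof.
by elim: T => [b|i l IHl r IHr|p l IHl r IHr] //=; rewrite (leq_trans IHl) ?leq_addr.
Qed.

Definition flip (i : 'I_n) (x : input n) : input n :=
  [ffun j => if j == i then ~~ x j else x j].

Lemma flipK i : involutive (flip i).
Proof.
move=> x; apply/ffunP => j; rewrite !ffunE.
by case: eqP => // ->; rewrite ?eqxx negbK.
Qed.

Lemma consis_flip rho i x : lookup rho i = None -> consis (flip i x) rho = consis x rho.
Proof.
elim: rho => [|[j c] r IH] //=.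
case: eqP => // /eqP ji /IH ->.
by rewrite ffunE (negbTE ji).
Qed.

Definition cnt (rho : seq ('I_n * bool)) : R := \sum_(x : input n | consis x rho) 1.

Lemma cnt_ge0 rho : 0 <= cnt rho.
Proof. by apply: sumr_ge0 => x _; rewrite ler01. Qed.

Lemma cnt_half rho i b : lookup rho i = None -> cnt ((i, b) :: rho) = cnt rho / 2.
Proof.
move=> E.
have H : \sum_(x : input n | consis x rho && x i) (1 : R) =
         \sum_(x : input n | consis x rho && ~~ x i) (1 : R).
  rewrite (reindex_inj (inv_inj (flipK i))) /=.
  apply: eq_bigl => x; rewrite consis_flip // ffunE eqxx.
  by [].
have -> : cnt ((i, b) :: rho) = \sum_(x : input n | consis x rho && (x i == b)) (1 : R).
  by apply: eq_bigl => x; rewrite /consis /= andbC.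
have -> : cnt rho = (\sum_(x : input n | consis x rho && ~~ x i) (1 : R)) *+ 2.
  have E2 : cnt rho = \sum_(x : input n | consis x rho && x i) (1 : R) + \sum_(x : input n | consis x rho && ~~ x i) (1 : R) by exact: bigID.
  by rewrite E2 H mulr2n.
case: b; last first.
  rewrite (eq_bigl (fun x : input n => consis x rho && ~~ x i)); first by lra.
  by move=> x; case: (x i); rewrite ?andbF ?andbT.
rewrite -H (eq_bigl (fun x : input n => consis x rho && x i)); first by lra.
by move=> x; case: (x i); rewrite ?andbF ?andbT.
Qed.

Lemma cnt_nil : cnt [::] = 2 ^+ n.
Proof.
rewrite /cnt /consis /= sumr_const card_ffun card_bool card_ord.
by rewrite -natrX.
Qed.

Lemma reach_sum (T : sdt n) k rho : sdt_wf T ->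
  \sum_(x | consis x rho) reach T k rho x <= (sdt_size T)%:R / 2 ^+ k * cnt rho.
Proof.
elim: T k rho => [b|i l IHl r IHr|p l IHl r IHr] k rho /=.
- move=> _; rewrite big1 // mulr_ge0 ?cnt_ge0 //.
  by rewrite mulr_ge0 // invr_ge0 exprn_ge0.
- case=> wl wr; case E: (lookup rho i) => [b|].
    have Hs : (sdt_size (if b then r else l))%:R / 2 ^+ k * cnt rho <=
              (sdt_size l + sdt_size r)%:R / 2 ^+ k * cnt rho.
      apply: ler_wpM2r; first exact: cnt_ge0.
      apply: ler_wpM2r; first by rewrite invr_ge0 exprn_ge0.
      by rewrite ler_nat; clear E; case: b; rewrite ?leq_addr ?leq_addl.
    apply: le_trans Hs; move: E; case: b => _; auto.
  case: k => [|k].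
    rewrite expr0 invr1 mulr1 -[X in X <= _]mul1r.
    apply: ler_wpM2r; first exact: cnt_ge0.
    by rewrite ler1n addn_gt0 size_ge1.
  have -> : \sum_(x | consis x rho)
      (if x i then reach r k ((i, true) :: rho) x else reach l k ((i, false) :: rho) x) =
      \sum_(x | consis x ((i, true) :: rho)) reach r k ((i, true) :: rho) x +
      \sum_(x | consis x ((i, false) :: rho)) reach l k ((i, false) :: rho) x.
    rewrite (bigID (fun x : input n => x i)) /=; congr (_ + _).
      apply: eq_big => x; first by rewrite /consis /= andbC; case: (x i).
      by case/andP => _ ->.
    apply: eq_big => x; first by rewrite /consis /= andbC; case: (x i).
    by case/andP => _ /negbTE ->.
  apply: le_trans (lerD (IHr k _ wr) (IHl k _ wl)) _.
  rewrite !cnt_half // natrD exprS invfM.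
  by rewrite le_eqVlt; apply/orP; left; apply/eqP; ring.
- case=> /andP[p0 p1] [wl wr]; rfix.
  rewrite big_split /= -!mulr_sumr.
  have hl := IHl k rho wl; have hr := IHr k rho wr.
  set K := 2 ^+ k.
  have K0 : 0 <= K^-1 * cnt rho by rewrite mulr_ge0 ?cnt_ge0 // invr_ge0 exprn_ge0.
  rewrite natrD -!mulrA in hl hr *.
  set A := \sum_(i | consis i rho) reach l k rho i in hl *.
  set B := \sum_(i | consis i rho) reach r k rho i in hr *.
  set Z := K^-1 * cnt rho in K0 hl hr *.
  have sl : 0 <= (sdt_size l)%:R * Z by rewrite mulr_ge0.
  have sr : 0 <= (sdt_size r)%:R * Z by rewrite mulr_ge0.
  have e1 : p * A <= p * ((sdt_size l)%:R * Z) by apply: ler_wpM2l.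
  have e2 : (1 - p) * B <= (1 - p) * ((sdt_size r)%:R * Z) by apply: ler_wpM2l => //; lra.
  nra.
Qed.

End Prune.

Section Dist.
Variable n : nat.

Fixpoint ddepth (T : sdt n) : nat :=
  match T with
  | SLeaf _ => 0
  | SNode _ l r => (maxn (ddepth l) (ddepth r)).+1
  | SCoin _ l r => maxn (ddepth l) (ddepth r)
  end.

Lemma ddepth_prune (T : sdt n) k rho : (ddepth (prune T k rho) <= k)%nat.
Proof.
elim: T k rho => [b|i l IHl r IHr|p l IHl r IHr] k rho //=.
- case: (lookup rho i) => [[]|]; auto.
  by case: k => [|k] //=; rewrite ltnS geq_max IHl IHr.
- by rewrite geq_max IHl IHr.
Qed.

Fixpoint sdist (T : sdt n) : seq (R * dt n) :=
  match T with
  | SLeaf b => [:: (1, Leaf n b)]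
  | SNode i l r => [seq (a.1 * c.1, Node i a.2 c.2) | a <- sdist l, c <- sdist r]
  | SCoin p l r => [seq (p * a.1, a.2) | a <- sdist l] ++ [seq ((1 - p) * a.1, a.2) | a <- sdist r]
  end.

Lemma all_allpairs' (A B C : Type) (P : pred C) (f : A -> B -> C) s t
  (PA : pred A) (PB : pred B) : all PA s -> all PB t ->
  (forall a b, PA a -> PB b -> P (f a b)) -> all P [seq f a b | a <- s, b <- t].
Proof.
move=> hs ht H; elim: s hs => [|a s IH] //= /andP[pa ps].
rewrite all_cat IH // andbT all_map.
by apply: sub_all ht => b /= hb; apply: H.
Qed.

Lemma dist_ge0 (T : sdt n) : sdt_wf T -> all (fun a => 0 <= a.1) (sdist T).
Proof.
elim: T => [b|i l IHl r IHr|p l IHl r IHr] /=.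
- by rewrite ler01.
- case=> /IHl hl /IHr hr; apply: (all_allpairs' hl hr) => a c /= ha hc.
  exact: mulr_ge0.
- case=> /andP[p0 p1] [/IHl hl /IHr hr].
  rewrite all_cat !all_map; apply/andP; split.
    by apply: sub_all hl => a /= ha; rewrite mulr_ge0.
  by apply: sub_all hr => a /= ha; rewrite mulr_ge0 //; lra.
Qed.

Lemma dist_depth (T : sdt n) : all (fun a => dt_depth a.2 <= ddepth T)%nat (sdist T).
Proof.
elim: T => [b|i l IHl r IHr|p l IHl r IHr] //=.
- apply: (all_allpairs' IHl IHr) => a c /= ha hc.
  rewrite ltnS geq_max; apply/andP; split.
    exact: leq_trans ha (leq_maxl _ _).
  exact: leq_trans hc (leq_maxr _ _).
- rewrite all_cat !all_map; apply/andP; split.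
    by apply: sub_all IHl => a /= /leq_trans; apply; rewrite leq_maxl.
  by apply: sub_all IHr => a /= /leq_trans; apply; rewrite leq_maxr.
Qed.

Lemma dist_sum1 (T : sdt n) : \sum_(a <- sdist T) a.1 = 1.
Proof.
elim: T => [b|i l IHl r IHr|p l IHl r IHr] /=.
- by rewrite big_seq1.
- rewrite big_allpairs_dep /=.
  under eq_bigr do rewrite -mulr_sumr IHr mulr1.
  exact: IHl.
- rewrite big_cat !big_map /= -!mulr_sumr IHl IHr; ring.
Qed.

Lemma dist_mu (T : sdt n) x :
  \sum_(a <- sdist T) a.1 * (dt_eval a.2 x : nat)%:R = mu T x.
Proof.
elim: T => [b|i l IHl r IHr|p l IHl r IHr] /=.
- by rewrite big_seq1 mul1r.
- rewrite big_allpairs_dep /=; case xi: (x i).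
    transitivity (\sum_(a <- sdist l) a.1 * mu r x).
      apply: eq_bigr => a _; rewrite -IHr mulr_sumr; apply: eq_bigr => c _ /=.
      by rewrite mulrA.
    by rewrite -mulr_suml dist_sum1 mul1r.
  rewrite -IHl; apply: eq_bigr => a _.
  rewrite -[RHS]mul1r -(dist_sum1 r) mulr_suml; apply: eq_bigr => c _ /=.
  rewrite ?xi; ring.
- by rfix; rewrite big_cat !big_map /= -IHl -IHr !mulr_sumr; congr (_ + _);
    apply: eq_bigr => a _; rewrite mulrA.
Qed.

End Dist.

Lemma exists_le_avg (I : finType) (W G : I -> R) : (forall i, 0 <= W i) ->
  \sum_i W i = 1 -> exists i, G i <= \sum_i W i * G i.
Proof.
move=> W0 W1; set S := \sum_i W i * G i.
case: (pickP (fun i => G i <= S)) => [i Hi|H]; first by exists i.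
exfalso.
have lt i : S < G i by rewrite ltNge H.
have E : \sum_i W i * (G i - S) = 0.
  under eq_bigr do rewrite mulrBr.
  by rewrite sumrB -mulr_suml W1 mul1r subrr.
have nn : forall i, true -> 0 <= W i * (G i - S).
  move=> i _; apply: mulr_ge0 => //; rewrite subr_ge0; exact: ltW.
have Z := psumr_eq0P nn E.
have W0' : forall i, W i = 0.
  move=> i; have := Z i isT.
  have h : 0 < G i - S by rewrite subr_gt0.
  move/eqP; rewrite mulf_eq0 => /orP[/eqP //|]; by rewrite gt_eqF.
move: W1; rewrite big1 // => /eqP; by rewrite eq_sym oner_eq0.
Qed.

Definition dis (mu : R) (b : bool) : R := if b then 1 - mu else mu.

Lemma dis_bound (mu a eps : R) : 0 < eps ->
  dis mu (round a) <= dis mu (round mu) + ((a - mu) ^+ 2 / eps + eps).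
Proof.
move=> e0; set y := a - mu.
have Q : (y - eps) ^+ 2 / eps = y ^+ 2 / eps + eps - 2 * y by field; rewrite gt_eqF.
have Q0 : 0 <= (y - eps) ^+ 2 / eps by rewrite divr_ge0 ?sqr_ge0 ?ltW.
have Q' : (y + eps) ^+ 2 / eps = y ^+ 2 / eps + eps + 2 * y by field; rewrite gt_eqF.
have Q1 : 0 <= (y + eps) ^+ 2 / eps by rewrite divr_ge0 ?sqr_ge0 ?ltW.
rewrite Q in Q0; rewrite Q' in Q1.
rewrite /dis /round /y in Q0 Q1 *.
case: (lerP 2^-1 a) => ha; case: (lerP 2^-1 mu) => hm; lra.
Qed.

Section Sample.
Variables (n N m : nat) (w : 'I_N -> R) (c : 'I_N -> input n -> R).
Hypothesis w0 : forall i, 0 <= w i.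
Hypothesis w1 : \sum_i w i = 1.
Hypothesis c01 : forall i x, 0 <= c i x <= 1.
Hypothesis m0 : (0 < m)%nat.

Definition muS x := \sum_i w i * c i x.
Definition AS (f : {ffun 'I_m -> 'I_N}) x := m%:R^-1 * \sum_j c (f j) x.
Definition W (f : {ffun 'I_m -> 'I_N}) := \prod_j w (f j).

Lemma W_ge0 f : 0 <= W f.
Proof. by apply: prodr_ge0 => j _. Qed.

Lemma W_sum : \sum_f W f = 1.
Proof.
rewrite /W -(bigA_distr_bigA (fun (_ : 'I_m) (i : 'I_N) => w i)) /=.
by rewrite big1 // => j _.
Qed.

Lemma var_term (d : 'I_N -> R) (j k : 'I_m) : \sum_i w i * d i = 0 ->
  \sum_f W f * (d (f j) * d (f k)) = if j == k then \sum_i w i * (d i * d i) else 0.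
Proof.
move=> d0.
pose F (l : 'I_m) (i : 'I_N) := w i * ((if l == j then d i else 1) * (if l == k then d i else 1)).
have E f : W f * (d (f j) * d (f k)) = \prod_l F l (f l).
  rewrite /F /W big_split /= big_split /=.
  by rewrite -!big_mkcond !big_pred1_eq.
under eq_bigr do rewrite E.
rewrite -(bigA_distr_bigA F) /= (bigD1 j) //=.
rewrite [X in X * _](_ : _ = \sum_i w i * (d i * (if j == k then d i else 1))); last first.
  by apply: eq_bigr => i _; rewrite /F eqxx.
case: (eqVneq j k) => [jk|jk].
  rewrite [X in _ * X]big1 ?mulr1 // => l /negbTE lj; rewrite /F -jk lj.
  by under eq_bigr do rewrite !mulr1; exact: w1.
rewrite [X in X * _](eq_bigr (fun i => w i * d i)); last by move=> i _; rewrite mulr1.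
by rewrite d0 mul0r.
Qed.

Lemma var_bound x : \sum_f W f * (AS f x - muS x) ^+ 2 <= (4 * m%:R)^-1.
Proof.
set mu := muS x.
pose d i := c i x - mu.
have mN : m%:R != 0 :> R by rewrite pnatr_eq0 -lt0n.
have d0 : \sum_i w i * d i = 0.
  rewrite /d; under eq_bigr do rewrite mulrBr.
  by rewrite sumrB -mulr_suml w1 mul1r subrr.
have A f : AS f x - mu = m%:R^-1 * \sum_j d (f j).
  by rewrite /AS /d sumrB sumr_const card_ord -mulr_natr; field.
have Sq f : (AS f x - mu) ^+ 2 = m%:R^-1 ^+ 2 * \sum_j \sum_k d (f j) * d (f k).
  rewrite A exprMn; congr (_ * _).
  rewrite expr2 mulr_suml; apply: eq_bigr => j _; by rewrite mulr_sumr.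
have E : \sum_f W f * (AS f x - mu) ^+ 2 =
    m%:R^-1 ^+ 2 * \sum_j \sum_k \sum_f W f * (d (f j) * d (f k)).
  under eq_bigr do rewrite Sq mulrCA.
  rewrite -mulr_sumr; congr (_ * _).
  under eq_bigr do rewrite mulr_sumr.
  rewrite exchange_big; apply: eq_bigr => j _.
  under eq_bigr do rewrite mulr_sumr.
  by rewrite exchange_big.
rewrite E.
under eq_bigr do (under eq_bigr do rewrite var_term //).
set V := \sum_i w i * (d i * d i).
have EV : forall j : 'I_m, \sum_k (if j == k then V else 0) = V.
  move=> j; rewrite (bigD1 j) //= eqxx big1 ?addr0 // => k /negbTE.
  by rewrite eq_sym => ->.
under eq_bigr do rewrite EV.
rewrite sumr_const card_ord.
have HV : V <= 4^-1.
  have -> : V = \sum_i w i * (c i x * c i x) - mu ^+ 2.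
    rewrite /V (eq_bigr (fun i => w i * (c i x * c i x) - (2 * mu) * (w i * c i x) + mu ^+ 2 * w i)); last first.
      by move=> i _; rewrite /d; ring.
    rewrite big_split sumrB /= -!mulr_sumr w1 -/(muS x) -/mu; ring.
  have : \sum_i w i * (c i x * c i x) <= mu.
    apply: ler_sum => i _; apply: ler_wpM2l => //.
    have /andP[a b] := c01 i x; rewrite -[X in _ <= X]mulr1; exact: ler_wpM2l.
  have := sqr_ge0 (mu - 2^-1); lra.
rewrite -[V *+ m]mulr_natr.
have m0' : 0 < m%:R^-1 :> R by rewrite invr_gt0 ltr0n.
have -> : m%:R^-1 ^+ 2 * (V * m%:R) = V * m%:R^-1 by field.
rewrite invfM; apply: ler_wpM2r; [exact: ltW | exact: HV].
Qed.

Lemma per_x x eps : 0 < eps -> 1 <= 4 * m%:R * eps ^+ 2 ->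
  \sum_f W f * dis (muS x) (round (AS f x)) <= dis (muS x) (round (muS x)) + 2 * eps.
Proof.
move=> e0 he.
set D := dis (muS x) (round (muS x)).
apply: le_trans (_ : \sum_f (W f * D + W f * (AS f x - muS x) ^+ 2 / eps + W f * eps) <= _).
  apply: ler_sum => f _.
  apply: le_trans (ler_wpM2l (W_ge0 f) (dis_bound (muS x) (AS f x) e0)) _.
  rewrite le_eqVlt; apply/orP; left; apply/eqP; rewrite /D; ring.
rewrite !big_split /= -!mulr_suml W_sum !mul1r.
have HV := var_bound x.
have m4 : 0 < 4 * m%:R :> R by rewrite mulr_gt0 // ltr0n.
have h4 : (4 * m%:R)^-1 <= eps ^+ 2.
  have -> : eps ^+ 2 = (4 * m%:R)^-1 * (4 * m%:R * eps ^+ 2).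
    by rewrite mulrA mulVf ?mul1r // gt_eqF.
  rewrite -[X in X <= _]mulr1; apply: ler_wpM2l he.
  by rewrite invr_ge0 ltW.
have h5 : (\sum_f W f * (AS f x - muS x) ^+ 2) / eps <= eps.
  rewrite [X in _ <= X](_ : eps = eps ^+ 2 / eps); last by rewrite expr2 mulfK // gt_eqF.
  apply: ler_wpM2r; first by rewrite invr_ge0 ltW.
  exact: le_trans HV h4.
lra.
Qed.

Lemma ExE (g : input n -> R) : Ex g = (2 ^+ n)^-1 * \sum_x g x.
Proof. by []. Qed.

Lemma Ex_add (g : input n -> R) a : Ex (fun x => g x + a) = Ex g + a.
Proof.
rewrite !ExE.
have -> : \sum_(x : input n) (g x + a) = \sum_(x : input n) g x + \sum_(x : input n) a by exact: big_split.
rewrite sumr_const card_ffun card_bool card_ord mulrDr; congr (_ + _).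
rewrite -[a *+ _]mulr_natr natrX mulrCA mulVf ?mulr1 // expf_neq0 //.
by rewrite pnatr_eq0.
Qed.

Lemma Ex_le (g h : input n -> R) : (forall x, g x <= h x) -> Ex g <= Ex h.
Proof.
move=> H; rewrite !ExE; apply: ler_wpM2l; first by rewrite invr_ge0 exprn_ge0.
by apply: ler_sum => x _.
Qed.

Lemma sample eps : 0 < eps -> 1 <= 4 * m%:R * eps ^+ 2 ->
  exists f : {ffun 'I_m -> 'I_N},
    Ex (fun x => dis (muS x) (round (AS f x))) <=
    Ex (fun x => dis (muS x) (round (muS x))) + 2 * eps.
Proof.
move=> e0 he.
have [f Hf] := exists_le_avg (fun f => Ex (fun x => dis (muS x) (round (AS f x)))) W_ge0 W_sum.
exists f; apply: le_trans Hf _.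
have -> : \sum_f W f * Ex (fun x => dis (muS x) (round (AS f x))) =
          Ex (fun x => \sum_f W f * dis (muS x) (round (AS f x))).
  rewrite !ExE; under eq_bigr do rewrite ExE mulrCA.
  rewrite -mulr_sumr; congr (_ * _).
  under eq_bigr do rewrite mulr_sumr.
  exact: exchange_big.
rewrite -Ex_add; apply: Ex_le => x; exact: per_x.
Qed.

End Sample.

Lemma two : IZR 2 = 2%:R :> R. Proof. by rewrite -INRE. Qed.
Lemma ln2h : 2^-1 < ln 2%:R.
Proof. rewrite -two -RinvE; apply/RltP; exact: ln_lt_2. Qed.
Definition lnr (x : R) := ln x.
Lemma lnM (a b : R) : 0 < a -> 0 < b -> lnr (a * b) = lnr a + lnr b.
Proof. by move=> /RltP ha /RltP hb; rewrite /lnr ln_mult. Qed.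
Lemma lnX (a : R) k : 0 < a -> ln (a ^+ k) = k%:R * ln a.
Proof. by move=> /RltP ha; rewrite -RpowE ln_pow // INRE. Qed.
Lemma ln_lt (a b : R) : 0 < a -> a < b -> ln a < ln b.
Proof. by move=> /RltP ha /RltP hb; apply/RltP; apply: ln_increasing. Qed.

Lemma pow2_bracket (y : R) : 1 <= y -> exists d : nat, y <= 2 ^+ d /\ 2 ^+ d < 2 * y.
Proof.
move=> y1.
have ex : exists d : nat, y <= 2 ^+ d.
  have y0 : 0 <= y by lra.
  exists (Num.Def.archi_bound y); apply: le_trans (ltW (archi_boundP y0)) _.
  rewrite -natrX ler_nat; apply: ltnW; exact: ltn_expl.
case: (ex_minnP ex) => d hd hmin; exists d; split => //.
case: d hd hmin => [|d] hd hmin; first by rewrite expr0; lra.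
have : ~~ (y <= 2 ^+ d).
  by apply/negP => /hmin; rewrite ltnn.
rewrite -ltNge exprS => h; lra.
Qed.

Lemma dis_round_min mu b : dis mu (round mu) <= dis mu b.
Proof. by rewrite /dis /round; case: b; case: (lerP 2^-1 mu) => h; lra. Qed.

Lemma Ex_ext n (g h : input n -> R) : (forall x, g x = h x) -> Ex g = Ex h.
Proof. by move=> H; rewrite !ExE; congr (_ * _); apply: eq_bigr. Qed.

Lemma Ex_addf n (g h : input n -> R) : Ex (fun x => g x + h x) = Ex g + Ex h.
Proof.
rewrite !ExE -mulrDr; congr (_ * _).
exact: big_split.
Qed.

Lemma disagree_prune n (T : sdt n) k x b : sdt_wf T ->
  disagree T x b <= disagree (prune T k [::]) x b + reach T k [::] x.
Proof.
move=> w; have := @prune_err n T k [::] x w isT.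
rewrite ler_norml => /andP[h1 h2].
by rewrite /disagree; case: b; lra.
Qed.

Lemma disagree_prune2 n (T : sdt n) k x b : sdt_wf T ->
  disagree (prune T k [::]) x b <= disagree T x b + reach T k [::] x.
Proof.
move=> w; have := @prune_err n T k [::] x w isT.
rewrite ler_norml => /andP[h1 h2].
by rewrite /disagree; case: b; lra.
Qed.

Unset Implicit Arguments.
Theorem corollary7 :
  exists C : R, 0 < C /\
  forall (n : nat) (T : sdt n) (eps : R),
    sdt_wf T -> 0 < eps < 2^-1 ->
    exists Tt : dt n,
      (dt_depth Tt)%:R <= C * ln ((sdt_size T)%:R / eps) / eps ^+ 2 /\
      err Tt T <= opt T + 3 * eps.
Proof.
exists 4; split; first lra.
move=> n T eps wT /andP[e0 e1].
have s1 : 1 <= (sdt_size T)%:R :> R by rewrite ler1n size_ge1.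
set s := (sdt_size T)%:R in s1 *.
set X := s / eps.
have X2 : 2 < X by rewrite /X ltr_pdivlMr //; lra.
have hX : 1 <= 2 * X by lra.
have [k [hk1 hk2]] := pow2_bracket hX.
have e2 : 0 < eps ^+ 2 by rewrite exprn_gt0.
have y2 : 1 <= (4 * eps ^+ 2)^-1.
  rewrite invf_ge1; last by rewrite mulr_gt0.
  have : eps ^+ 2 <= 4^-1 by rewrite expr2; have := ler_wpM2l (ltW e0) (ltW e1); lra.
  lra.
have [mm [hm1 hm2]] := pow2_bracket y2.
pose m := expn 2 mm.
have mR : m%:R = 2 ^+ mm :> R by rewrite /m natrX.
have hm : 1 <= 4 * m%:R * eps ^+ 2.
  rewrite mR.
  have h4 : 0 < 4 * eps ^+ 2 by rewrite mulr_gt0.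
  have h := ler_wpM2r (ltW h4) hm1.
  rewrite mulVf ?gt_eqF // in h.
  lra.
set T' := prune T k [::].
have wT' : sdt_wf T' := prune_wf k [::] wT.
set dl := sdist T'.
set d0 := ((0 : R), Leaf n false).
set N := size dl.
pose w (i : 'I_N) := (nth d0 dl i).1.
pose c (i : 'I_N) (x : input n) : R := (dt_eval (nth d0 dl i).2 x : nat)%:R.
have w0 : forall i, 0 <= w i.
  by move=> i; move/(all_nthP d0): (dist_ge0 wT'); apply.
have w1 : \sum_i w i = 1.
  by rewrite -(dist_sum1 T') (big_nth d0) big_mkord.
have c01 : forall i x, 0 <= c i x <= 1.
  by move=> i x; rewrite /c; case: dt_eval; rewrite ?ler01 ?lexx.
have m0 : (0 < m)%nat by rewrite expn_gt0.
have muE : forall x, muS w c x = mu T' x.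
  by move=> x; rewrite /muS -dist_mu (big_nth d0) big_mkord.
have [f Hf] := sample w0 w1 c01 m0 e0 hm.
pose ts := [seq (nth d0 dl (f j)).2 | j <- index_enum 'I_m].
pose g := fun bs : seq bool => round (m%:R^-1 * \sum_(b <- bs) (b : nat)%:R).
have evalE : forall x, dt_eval (runall ts g) x = round (AS c f x).
  by move=> x; rewrite runall_eval /g /AS /ts !big_map.
exists (runall ts g); split.
- have dd : (dt_depth (runall ts g) <= m * k)%nat.
    apply: leq_trans (runall_depth ts g) _.
    rewrite /ts big_map.
    apply: (@leq_trans (\sum_(j : 'I_m) k)%nat).
      apply: leq_sum => j _.
      have := dist_depth T'; move/(all_nthP d0) => /(_ (f j) (ltn_ord _)) /= h.
      exact: leq_trans h (ddepth_prune T k [::]).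
    by rewrite big_const_ord iter_addn_0 mulnC.
  have Hd : (dt_depth (runall ts g))%:R <= (m * k)%:R :> R by rewrite ler_nat.
  apply: le_trans Hd _; rewrite natrM mR.
  set M := 2 ^+ mm in hm1 hm2 *.
  set K := 2 ^+ k in hk1 hk2.
  have two0 : 0 < 2 :> R by [].
  have K0 : 0 < K by rewrite exprn_gt0.
  have lnK : ln K = k%:R * ln 2 by rewrite lnX.
  have X0 : 0 < X by lra.
  have lnB := ln_lt K0 hk2.
  have lnB' : lnr K < lnr (2 * (2 * X)) := lnB.
  have X2' : 0 < 2 * X by rewrite mulr_gt0.
  have E1 := lnM two0 X2'.
  have E2 := lnM two0 X0.
  rewrite E1 E2 /lnr lnK in lnB'.
  rewrite RdivE -/X.
  have LX : ln 2 < ln X by apply: ln_lt.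
  have l2 := ln2h.
  have k0 : 0 <= k%:R :> R by [].
  have hkl : 0 <= k%:R * (ln 2 - 2^-1) by apply: mulr_ge0 => //; lra.
  have kL : k%:R <= 6 * ln X by lra.
  have h4 : 0 < 4 * eps ^+ 2 by rewrite mulr_gt0.
  rewrite ltr_pdivlMr // in hm2.
  have ML : M * eps ^+ 2 <= 2^-1 by lra.
  rewrite ler_pdivlMr //.
  have := ler_wpM2r k0 ML.
  lra.
- set ER := Ex (reach T k [::]).
  have hER : ER <= eps / 2.
    have H := reach_sum k [::] wT.
    rewrite cnt_nil in H.
    rewrite /ER ExE; apply: le_trans (ler_wpM2l _ H) _; first by rewrite invr_ge0 exprn_ge0.
    have n2 : (2 ^+ n : R) != 0 by rewrite expf_neq0 // pnatr_eq0.
    rewrite mulrCA mulVf // mulr1 -/s.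
    have K0 : 0 < 2 ^+ k :> R by rewrite exprn_gt0.
    rewrite ler_pdivrMr //.
    have -> : s = eps / 2 * (2 * X) by rewrite /X; field; rewrite gt_eqF.
    apply: ler_wpM2l => //; lra.
  have step1 : err (runall ts g) T <= Ex (fun x => dis (muS w c x) (round (AS c f x))) + ER.
    rewrite /err /ER -Ex_addf; apply: Ex_le => x.
    rewrite evalE muE.
    exact: disagree_prune k x (round (AS c f x)) wT.
  have step2 : Ex (fun x => dis (muS w c x) (round (muS w c x))) <= opt T + ER.
    rewrite /opt /ER -Ex_addf; apply: Ex_le => x; rewrite muE.
    apply: le_trans (dis_round_min (mu T' x) (round (mu T x))) _.
    exact: disagree_prune2 k x (round (mu T x)) wT.
  lra.
Qed.
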